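(* Let $\alpha>-1$, $d\in\widetilde{D}$, $p=(L_n^{(\alpha+1)})_{n\in\mathbb{N}_0}$, $q=(L_n^{(\alpha)})_{n\in\mathbb{N}_0}$, and let $T=E_{p,d}$ be regarded as an operator in $H(q)$ with domain $\mathcal{P}_c$. Suppose $f=\sum_kf_kq_k$ and $g=\sum_kg_kq_k$ in $H(q)$ are such that $(f,g)$ lies in the closure of the graph $G(T)$ in $H(q)\times H(q)$. Then: (a) there exists an array $(h_{n,u})_{n,u\in\mathbb{N}_0}$ of complex numbers such that (a1) $h_{n,u}=0$ for all $u>n$; (a2) $\lim_{n\to\infty}h_{n,u}=f_u$ for each $u\in\mathbb{N}_0$; (a3) $\lim_{n\to\infty}h_{n,n}d_n=0$; (a4) $\lim_{n\to\infty}\sum_{u=1}^nh_{n,u}(d_u-d_{u-1})=g_0-f_0d_0$; (b) for every $k\in\mathbb{N}$, $g_k=g_0-f_0d_0+f_kd_k-\sum_{u=1}^kf_u(d_u-d_{u-1})$.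
   Context: $\mathcal{P}_c$ is the space of polynomials in one real variable with complex coefficients. For $\beta>-1$, $L_n^{(\beta)}(x)=\sum_{k=0}^n\frac{(-1)^k}{k!}\binom{n+\beta}{n-k}x^k$ is the generalized Laguerre polynomial. For a sequence $Q=(Q_n)$ of polynomials with $\deg Q_n=n$, $H(Q)$ is the completion of $\mathcal{P}_c$ with respect to the inner product making $(Q_n)$ orthonormal; $g\in H(Q)$ is written $g=\sum_kg_kQ_k$, $(g_k)\in\ell_2$. $\widetilde{D}$ is the set of non-constant sequences of non-zero complex numbers. For a polynomial sequence $p$ and $d\in\widetilde{D}$, $E_{p,d}$ is the linear map on $\mathcal{P}_c$ with $E_{p,d}(p_n)=d_np_n$. *)

(* Defs.v *)
From HB Require Import structures.
From mathcomp Require Import all_boot all_order all_algebra.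
From mathcomp Require Import all_classical all_reals all_analysis.
From mathcomp Require Import complex.
Set Implicit Arguments. Unset Strict Implicit. Unset Printing Implicit Defensive.
Import Order.TTheory GRing.Theory Num.Theory numFieldNormedType.Exports.
Local Open Scope classical_set_scope.
Local Open Scope ring_scope.

Section LaguerreDefs.
Variable R : realType.
Local Notation C := R[i].

Definition cabs (z : C) : R := complex.Re `|z|.

Definition cvgC (u : nat -> C) (l : C) : Prop :=
  (fun n => cabs (u n - l)) @ \oo --> (0 : R).

Definition gbinom (x : C) (m : nat) : C :=
  (\prod_(j < m) (x - j%:R)) / (m`!)%:R.

Definition laguerre (beta : R) (n : nat) : {poly C} :=
  \sum_(k < n.+1)
     (((-1) ^+ k / (k`!)%:R) * gbinom (n%:R + (beta%:C)%C) (n - k)) *: 'X^k.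

Definition Dtilde (d : nat -> C) : Prop :=
  (forall n, d n != 0) /\ exists m n, d m != d n.

(* graph of E_{p,d} : P_c -> P_c, the linear map with E(p_n) = d_n p_n *)
Definition graphE (p : nat -> {poly C}) (d : nat -> C) (P TP : {poly C}) : Prop :=
  exists (N : nat) (c : nat -> C),
    P = \sum_(k < N) c k *: p k /\ TP = \sum_(k < N) (d k * c k) *: p k.

(* a : nat -> C is the (finitely supported) coefficient sequence of the
   polynomial P in the basis Q, i.e. the image of P in H(Q) ~ l2 *)
Definition coords (Q : nat -> {poly C}) (P : {poly C}) (a : nat -> C) : Prop :=
  exists N : nat, (forall k, (N <= k)%N -> a k = 0) /\
                  P = \sum_(k < N) a k *: Q k.

Definition l2norm2 (x : nat -> C) : \bar R :=
  (\sum_(0 <= k <oo) ((cabs (x k)) ^+ 2)%:E)%E.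

Definition in_l2 (x : nat -> C) : Prop := (l2norm2 x < +oo)%E.

(* (f, g) in the closure in H(Q) x H(Q) of the graph of E_{p,d} (domain P_c),
   elements of H(Q) being represented by their coefficient sequences in l2 *)
Definition in_graph_closure (p Q : nat -> {poly C}) (d : nat -> C)
    (f g : nat -> C) : Prop :=
  exists (P TP : nat -> {poly C}) (a b : nat -> nat -> C),
    (forall m, graphE p d (P m) (TP m)) /\
    (forall m, coords Q (P m) (a m)) /\
    (forall m, coords Q (TP m) (b m)) /\
    (fun m => l2norm2 (fun k => a m k - f k)) @ \oo --> 0%E /\
    (fun m => l2norm2 (fun k => b m k - g k)) @ \oo --> 0%E.

End LaguerreDefs.

(* Main.v *)
Require Import Defs.
From HB Require Import structures.
From mathcomp Require Import all_boot all_order all_algebra.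
From mathcomp Require Import all_classical all_reals all_analysis.
From mathcomp Require Import complex.
From mathcomp Require Import ring lra.
Import Order.TTheory GRing.Theory Num.Theory numFieldNormedType.Exports.
Local Open Scope classical_set_scope.
Local Open Scope ring_scope.
Set Implicit Arguments. Unset Strict Implicit.
Section A.
Variable R : realType.
Local Notation C := R[i].

Lemma cabsE (z : C) : cabs z = Normc.normc z.
Proof. by case: z => a b; rewrite /cabs normc_def. Qed.

Lemma cabs_ge0 (z : C) : 0 <= cabs z.
Proof. by rewrite cabsE; case: z => a b /=; exact: sqrtr_ge0. Qed.

Lemma cabsD (x y : C) : cabs (x + y) <= cabs x + cabs y.
Proof. rewrite !cabsE; exact: le_normcD. Qed.

Lemma cabsM (x y : C) : cabs (x * y) = cabs x * cabs y.
Proof. rewrite !cabsE; exact: Normc.normcM. Qed.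

Lemma cabsN (x : C) : cabs (- x) = cabs x.
Proof. rewrite !cabsE; exact: normcN. Qed.

Lemma cabs0 : cabs (0 : C) = 0.
Proof. rewrite cabsE; exact: Normc.normc0. Qed.

Lemma cabs_eq0 (z : C) : cabs z = 0 -> z = 0.
Proof. rewrite cabsE; exact: Normc.eq0_normc. Qed.

Lemma cabsB (x y : C) : cabs (x - y) = cabs (y - x).
Proof. by rewrite -cabsN opprB. Qed.

Lemma cvgCP (u : nat -> C) l : cvgC u l <->
  forall e : R, 0 < e -> exists N, forall n, (N <= n)%N -> cabs (u n - l) < e.
Proof.
rewrite /cvgC; split.
- move=> /cvgrPdist_lt H e e0; have [N _ HN] := H e e0.
  exists N => n Nn; have := HN n Nn; rewrite /= sub0r normrN ger0_norm //.
  exact: cabs_ge0.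
- move=> H; apply/cvgrPdist_lt => e e0; have [N HN] := H e e0.
  exists N => // n /= Nn; rewrite sub0r normrN ger0_norm ?cabs_ge0 //; exact: HN.
Qed.

Definition cv (u : nat -> C) l :=
  forall e : R, 0 < e -> exists N, forall n, (N <= n)%N -> cabs (u n - l) < e.

Lemma cv_cst c : cv (fun _ => c) c.
Proof. by move=> e e0; exists 0%N => n _; rewrite subrr cabs0. Qed.

Lemma cv_add u v l l' : cv u l -> cv v l' -> cv (fun n => u n + v n) (l + l').
Proof.
move=> Hu Hv e e0.
have e2 : 0 < e / 2 by rewrite divr_gt0.
have [N1 H1] := Hu _ e2; have [N2 H2] := Hv _ e2.
exists (maxn N1 N2) => n; rewrite geq_max => /andP[n1 n2].
have := H1 n n1; have := H2 n n2.
have -> : u n + v n - (l + l') = (u n - l) + (v n - l') by ring.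
have := cabsD (u n - l) (v n - l'); lra.
Qed.

Lemma cv_mulr u l c : cv u l -> cv (fun n => u n * c) (l * c).
Proof.
move=> Hu e e0.
have ce : 0 < e / (cabs c + 1) by rewrite divr_gt0 // ltr_wpDl ?cabs_ge0.
have [N H] := Hu _ ce; exists N => n Nn.
have -> : u n * c - l * c = (u n - l) * c by ring.
rewrite cabsM.
have := H n Nn; have := cabs_ge0 c; have := cabs_ge0 (u n - l).
move: (cabs (u n - l)) (cabs c) => x y x0 y0.
rewrite ltr_pdivlMr ?ltr_wpDl // => hx.
nra.
Qed.

Lemma cv_opp u l : cv u l -> cv (fun n => - u n) (- l).
Proof.
move=> Hu e e0; have [N H] := Hu e e0; exists N => n Nn.
by rewrite -opprD cabsN; apply: H.
Qed.

Lemma cv_sub u v l l' : cv u l -> cv v l' -> cv (fun n => u n - v n) (l - l').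
Proof. by move=> Hu Hv; exact: (cv_add Hu (cv_opp Hv)). Qed.

Lemma cv_sum (F : nat -> nat -> C) (L : nat -> C) a b :
  (forall u, cv (fun n => F n u) (L u)) ->
  cv (fun n => \sum_(a <= u < b) F n u) (\sum_(a <= u < b) L u).
Proof.
move=> HF; elim: b => [|b IH].
  by under eq_fun do rewrite big_geq //; rewrite big_geq //; apply: cv_cst.
case: (leqP a b) => ab.
  under eq_fun do rewrite big_nat_recr //; rewrite big_nat_recr //.
  exact: (cv_add IH (HF b)).
under eq_fun do rewrite big_geq //; rewrite big_geq //; apply: cv_cst.
Qed.

Lemma cv_unique u l1 l2 : cv u l1 -> cv u l2 -> l1 = l2.
Proof.
move=> H1 H2; apply/eqP; rewrite -subr_eq0; apply/eqP/cabs_eq0.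
apply/eqP; rewrite eq_le cabs_ge0 andbT; apply/ler_addgt0Pr => e e0.
rewrite add0r.
have e2 : 0 < e / 2 by rewrite divr_gt0.
have [N1 K1] := H1 _ e2; have [N2 K2] := H2 _ e2.
have := K1 (maxn N1 N2) (leq_maxl _ _); have := K2 (maxn N1 N2) (leq_maxr _ _).
move: (u (maxn N1 N2)) => x h2 h1.
have -> : l1 - l2 = (l1 - x) + (x - l2) by ring.
have := cabsD (l1 - x) (x - l2); rewrite (cabsB l1); lra.
Qed.

Lemma cv_ext u v l : cv u l -> (exists N, forall n, (N <= n)%N -> u n = v n) -> cv v l.
Proof.
move=> Hu [N0 HN] e e0; have [N H] := Hu e e0; exists (maxn N N0) => n.
rewrite geq_max => /andP[n1 n2]; rewrite -HN //; exact: H.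
Qed.

Lemma cv_comp u l (m : nat -> nat) : cv u l ->
  (forall M, exists N, forall n, (N <= n)%N -> (M <= m n)%N) ->
  cv (fun n => u (m n)) l.
Proof.
move=> Hu Hm e e0; have [M H] := Hu e e0; have [N HN] := Hm M.
exists N => n Nn; exact/H/HN.
Qed.

Lemma cvP u l : cv u l -> cvgC u l.
Proof. by move=> H; apply/cvgCP. Qed.

Lemma term_le_series (w : nat -> \bar R) k : (forall i, (0 <= w i)%E) ->
  (w k <= \sum_(0 <= i <oo) w i)%E.
Proof.
move=> w0; apply: le_trans (nneseries_lim_ge k.+1 _); last by move=> *; apply: w0.
rewrite big_nat_recr //=; apply: leeDr; exact: sume_ge0.
Qed.

Lemma l2_coord (x : nat -> nat -> C) (y : nat -> C) :
  (fun m => l2norm2 (fun k => x m k - y k)) @ \oo --> 0%E ->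
  forall k, cv (fun m => x m k) (y k).
Proof.
move=> /fine_cvgP [[N0 _ HF] /cvgrPdist_lt Hc] k e e0.
have [N1 _ H1] := Hc (e ^+ 2) (exprn_gt0 _ e0).
exists (maxn N0 N1) => n; rewrite geq_max => /andP[n0 n1].
have := H1 n n1; have := HF n n0.
set L := l2norm2 _ => Lf /=; rewrite sub0r normrN => hL.
have hle : (((cabs (x n k - y k)) ^+ 2)%:E <= L)%E.
  by apply: (term_le_series (w := fun k => ((cabs (x n k - y k)) ^+ 2)%:E)) => i; rewrite lee_fin sqr_ge0.
rewrite -(fineK Lf) lee_fin in hle.
have := ler_norm (fine L); have := cabs_ge0 (x n k - y k).
move: (cabs _) (fine L) hle hL => c f; nra.
Qed.
End A.
Section B.
Variable R : realType.
Local Notation C := R[i].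

Lemma gbinom0 (x : C) : gbinom x 0 = 1.
Proof. by rewrite /gbinom big_ord0 fact0 divr1. Qed.

Lemma gbinomS (x : C) m : gbinom (x + 1) m.+1 = gbinom x m.+1 + gbinom x m.
Proof.
rewrite /gbinom big_ord_recl big_ord_recr /=.
have -> : \prod_(i < m) (x + 1 - (bump 0 i)%:R) = \prod_(i < m) (x - i%:R).
  by apply: eq_bigr => i _; rewrite /bump /= add1n -natr1; ring.
set P := \prod_(i < m) _.
rewrite factS natrM.
have h1 : (m`!)%:R != 0 :> C by rewrite pnatr_eq0 -lt0n fact_gt0.
have h2 : (m.+1)%:R != 0 :> C by rewrite pnatr_eq0.
rewrite subr0.
apply: (@mulIf _ ((m.+1)%:R * (m`!)%:R)); first by rewrite mulf_neq0.
rewrite [in RHS]mulrDl !divfK ?mulf_neq0 // (mulrC (m.+1%:R)) mulrA divfK // -natr1; ring.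
Qed.

Definition lagw (b : R) (n k : nat) : C :=
  ((-1) ^+ k / (k`!)%:R) * gbinom (n%:R + (b%:C)%C) (n - k).

Lemma coef_lag (b : R) n j : (laguerre b n)`_j = if (j < n.+1)%N then lagw b n j else 0.
Proof.
have -> : laguerre b n = \poly_(i < n.+1) lagw b n i by rewrite poly_def.
by rewrite coef_poly.
Qed.

Lemma lagS (b : R) n : laguerre (b + 1) n.+1 = laguerre (b + 1) n + laguerre b n.+1.
Proof.
apply/polyP => j; rewrite coefD !coef_lag /lagw.
case: (ltngtP j n.+1) => hj.
- have hj' : (j <= n)%N by rewrite -ltnS.
  rewrite ltnS (ltnW hj) (subSn hj').
  have -> : (n.+1)%:R + ((b + 1)%:C)%C = (n%:R + ((b + 1)%:C)%C) + 1 :> C.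
    by rewrite rmorphD /= rmorph1 -natr1; ring.
  have -> : (n.+1)%:R + (b%:C)%C = (n%:R + ((b + 1)%:C)%C) :> C.
    by rewrite rmorphD /= rmorph1 -natr1; ring.
  by rewrite gbinomS; ring.
- by rewrite ltnNge hj /= add0r.
- by rewrite hj ltnSn subnn !gbinom0 add0r.
Qed.

Lemma lag_sum (b : R) n : laguerre (b + 1) n = \sum_(k < n.+1) laguerre b k.
Proof.
elim: n => [|n IH].
  rewrite big_ord1; apply/polyP => j; rewrite !coef_lag /lagw.
  by case: (j < 1)%N; rewrite // ?subn0 !gbinom0.
by rewrite big_ord_recr /= -IH lagS.
Qed.

Lemma lag_hi (b : R) k j : (k < j)%N -> (laguerre b k)`_j = 0.
Proof. by move=> h; rewrite coef_lag ltnNge h. Qed.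

Lemma lag_top (b : R) k : (laguerre b k)`_k != 0.
Proof.
rewrite coef_lag ltnSn /lagw subnn gbinom0 mulr1.
rewrite mulf_neq0 // ?invr_eq0 ?pnatr_eq0 -?lt0n ?fact_gt0 //.
by rewrite expf_neq0 // oppr_eq0 oner_eq0.
Qed.

Lemma indep (Q : nat -> {poly C}) :
  (forall k j, (k < j)%N -> (Q k)`_j = 0) -> (forall k, (Q k)`_k != 0) ->
  forall M (z : nat -> C), \sum_(k < M) z k *: Q k = 0 ->
  forall k, (k < M)%N -> z k = 0.
Proof.
move=> Hhi Htop; elim=> [|M IH] z H k hk //.
have zM : z M = 0.
  have := congr1 (fun p : {poly C} => p`_M) H.
  rewrite coef_sum coef0 big_ord_recr /= big1 ?add0r ?coefZ.
    by move/eqP; rewrite mulf_eq0 (negbTE (Htop M)) orbF => /eqP.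
  by move=> i _; rewrite coefZ Hhi ?mulr0.
rewrite big_ord_recr /= zM scale0r addr0 in H.
case: (ltngtP k M) => h.
- exact: IH.
- by move: hk; rewrite ltnS leqNgt h.
- by rewrite h.
Qed.

Lemma sum_widen (V : zmodType) (F : nat -> V) N M :
  (forall k, (N <= k)%N -> F k = 0) -> (N <= M)%N ->
  \sum_(k < N) F k = \sum_(k < M) F k.
Proof.
move=> HF; elim: M => [|M IH] hNM.
  by move: hNM; rewrite leqn0 => /eqP ->.
case: (leqP N M) => h.
  by rewrite big_ord_recr /= -IH // HF // addr0.
by have -> : N = M.+1 by apply/eqP; rewrite eqn_leq hNM h.
Qed.

Lemma coords_unique (Q : nat -> {poly C}) P a N' (y : nat -> C) :
  (forall k j, (k < j)%N -> (Q k)`_j = 0) -> (forall k, (Q k)`_k != 0) ->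
  coords Q P a -> P = \sum_(k < N') y k *: Q k ->
  (forall k, (N' <= k)%N -> y k = 0) -> forall k, a k = y k.
Proof.
move=> Hhi Htop [N [Ha HP]] HP' Hy k.
pose M := maxn N N'.
have E1 : P = \sum_(k < M) a k *: Q k.
  rewrite HP (@sum_widen _ (fun k => a k *: Q k) N M) ?leq_maxl //.
  by move=> i hi; rewrite Ha // scale0r.
have E2 : P = \sum_(k < M) y k *: Q k.
  rewrite HP' (@sum_widen _ (fun k => y k *: Q k) N' M) ?leq_maxr //.
  by move=> i hi; rewrite Hy // scale0r.
have H0 : \sum_(k < M) (a k - y k) *: Q k = 0.
  under eq_bigr do rewrite scalerBl.
  by rewrite sumrB -E1 -E2 subrr.
case: (ltnP k M) => hk.
  by apply/eqP; rewrite -subr_eq0; apply/eqP; exact: (@indep Q Hhi Htop M (fun k => a k - y k) H0 k hk).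
rewrite Ha ?Hy //; first exact: leq_trans (leq_maxr _ _) hk.
exact: leq_trans (leq_maxl _ _) hk.
Qed.

Definition Aof (N : nat) (c : nat -> C) (j : nat) : C :=
  \sum_(k < N) (if (j <= k)%N then c k else 0).

Lemma Aof_hi N c j : (N <= j)%N -> Aof N c j = 0.
Proof.
move=> h; apply: big1 => k _; case: ifP => // hk.
by move: (leq_trans h hk); rewrite leqNgt ltn_ord.
Qed.

Lemma Aof_rec N c j : Aof N c j = (if (j < N)%N then c j else 0) + Aof N c j.+1.
Proof.
rewrite /Aof; elim: N => [|N IH]; first by rewrite !big_ord0 addr0.
rewrite !big_ord_recr /= IH.
case: (ltngtP j N) => h.
- by rewrite ltnS (ltnW h) addrA.
- by rewrite ltnS leqNgt h /= !add0r !addr0.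
- by rewrite h ltnSn add0r addr0 addrC.
Qed.

Lemma expand (q : nat -> {poly C}) N (c : nat -> C) :
  \sum_(k < N) c k *: (\sum_(j < k.+1) q j) = \sum_(j < N) Aof N c j *: q j.
Proof.
elim: N => [|N IH]; first by rewrite !big_ord0.
rewrite big_ord_recr /= IH.
have -> : \sum_(j < N.+1) Aof N.+1 c j *: q j =
          \sum_(j < N.+1) (Aof N c j *: q j + c N *: q j).
  apply: eq_bigr => j _; rewrite -scalerDl; congr (_ *: _).
  by rewrite /Aof big_ord_recr /= -ltnS ltn_ord.
rewrite big_split /= [X in _ = X + _]big_ord_recr /= Aof_hi // scale0r addr0.
by rewrite scaler_sumr.
Qed.

Lemma core_id (a b c d : nat -> C) N :
  (forall j, a j = Aof N c j) -> (forall j, b j = Aof N (fun k => d k * c k) j) ->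
  forall k, b k = b 0%N - a 0%N * d 0%N + a k * d k
                  - \sum_(1 <= u < k.+1) a u * (d u - d u.-1).
Proof.
move=> Ha Hb; elim=> [|k IH].
  by rewrite big_geq //; ring.
rewrite big_nat_recr //=.
set c' := if (k < N)%N then c k else 0.
have Hak : a k = c' + a k.+1 by rewrite !Ha Aof_rec.
have Hbk : b k = d k * c' + b k.+1.
  by rewrite !Hb Aof_rec /c'; case: ifP; rewrite ?mulr0.
transitivity ((d k * c' + b k.+1) - d k * c'); first by ring.
rewrite -Hbk IH Hak; ring.
Qed.

End B.

Fixpoint mseq (Nf : nat -> nat) (n : nat) : nat :=
  match n with
  | 0 => 0
  | n'.+1 => if (Nf (mseq Nf n').+1 <= n'.+1)%N then (mseq Nf n').+1 else mseq Nf n'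
  end.

Lemma mseq_step Nf n : (mseq Nf n <= mseq Nf n.+1)%N.
Proof. by rewrite /=; case: ifP. Qed.

Lemma mseq_mono Nf n n' : (n <= n')%N -> (mseq Nf n <= mseq Nf n')%N.
Proof.
elim: n' => [|n' IH]; first by rewrite leqn0 => /eqP ->.
rewrite leq_eqVlt => /orP[/eqP -> //|]; rewrite ltnS => h.
exact: leq_trans (IH h) (mseq_step _ _).
Qed.

Lemma mseq_inv Nf n : (Nf (mseq Nf n) <= maxn n (Nf 0))%N.
Proof.
elim: n => [|n IH] /=; first by rewrite max0n.
case: ifP => h; first by apply: leq_trans h (leq_maxl _ _).
apply: leq_trans IH _; by rewrite geq_max !leq_max leqnSn leqnn !orbT.
Qed.

Lemma mseq_guard Nf n : (Nf 0 <= n)%N -> (Nf (mseq Nf n) <= n)%N.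
Proof.
move=> h; have := mseq_inv Nf n.
by have -> : maxn n (Nf 0) = n by apply/maxn_idPl.
Qed.

Lemma mseq_unb Nf M : exists N, forall n, (N <= n)%N -> (M <= mseq Nf n)%N.
Proof.
elim: M => [|M [N HN]]; first by exists 0%N.
pose n' := maxn N (Nf M.+1).
have H1 : (M.+1 <= mseq Nf n'.+1)%N.
  have hM := HN n' (leq_maxl _ _).
  case: (ltnP M (mseq Nf n')) => h.
    exact: leq_trans h (mseq_step _ _).
  have E : mseq Nf n' = M by apply/eqP; rewrite eqn_leq h hM.
  rewrite /= E; case: ifP => //.
  by rewrite (leq_trans (leq_maxr N _) (leqnSn _)).
exists n'.+1 => n hn; exact: leq_trans H1 (mseq_mono _ hn).
Qed.

Unset Implicit Arguments.
Theorem theorem6 (R : realType) (alpha : R) (d f g : nat -> R[i]) :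
  -1 < alpha ->
  Dtilde d ->
  in_l2 f -> in_l2 g ->
  in_graph_closure (laguerre (alpha + 1)) (laguerre alpha) d f g ->
  (exists h : nat -> nat -> R[i],
      (forall n u, (n < u)%N -> h n u = 0) /\
      (forall u, cvgC (fun n => h n u) (f u)) /\
      cvgC (fun n => h n n * d n) 0 /\
      cvgC (fun n => \sum_(1 <= u < n.+1) h n u * (d u - d u.-1))
           (g 0%N - f 0%N * d 0%N)) /\
  (forall k : nat, (0 < k)%N ->
     g k = g 0%N - f 0%N * d 0%N + f k * d k
           - \sum_(1 <= u < k.+1) f u * (d u - d u.-1)).
Proof.
move=> _ _ _ _ [P [TP [a [b [hG [hPa [hTb [ca cb]]]]]]]].
have Id : forall m k, b m k = b m 0%N - a m 0%N * d 0%N + a m k * d k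
                  - \sum_(1 <= u < k.+1) a m u * (d u - d u.-1).
  move=> m; have [N [c [HP HTP]]] := hG m.
  apply: (@core_id _ _ _ c _ N) => j.
  - apply: (coords_unique (@lag_hi _ alpha) (@lag_top _ alpha) (hPa m) (N' := N)) => //.
      by rewrite HP; under eq_bigr do rewrite lag_sum; exact: expand.
    exact: Aof_hi.
  - apply: (coords_unique (@lag_hi _ alpha) (@lag_top _ alpha) (hTb m) (N' := N)) => //.
      by rewrite HTP; under eq_bigr do rewrite lag_sum; exact: expand.
    exact: Aof_hi.
have Sup : forall m, exists N, forall k, (N <= k)%N -> a m k = 0 /\ b m k = 0.
  move=> m; have [N1 [H1 _]] := hPa m; have [N2 [H2 _]] := hTb m.
  exists (maxn N1 N2) => k; rewrite geq_max => /andP[k1 k2]; split.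
  - exact: H1.
  - exact: H2.
case: (choice Sup) => Nf HNf.
have SumId : forall m n, (Nf m <= n)%N ->
    \sum_(1 <= u < n.+1) a m u * (d u - d u.-1) = b m 0%N - a m 0%N * d 0%N.
  move=> m n hn; have := Id m n; have [-> ->] := HNf m n hn.
  rewrite mul0r addr0 => /esym/eqP; rewrite subr_eq0 => /eqP ->; done.
have Ca := l2_coord ca; have Cb := l2_coord cb.
split.
- exists (fun n u => if (Nf (mseq Nf n) <= n)%N then a (mseq Nf n) u else 0).
  split; [|split; [|split]].
  + move=> n u hnu; case: ifP => // hg.
    by have [-> _] := HNf _ u (leq_trans hg (ltnW hnu)).
  + move=> u; apply: cvP; apply: (cv_ext (cv_comp (Ca u) (mseq_unb Nf))).
    by exists (Nf 0%N) => n hn; rewrite mseq_guard.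
  + apply: cvP; apply: (cv_ext (cv_cst 0)); exists 0%N => n _.
    case: ifP => hg; last by rewrite mul0r.
    by have [-> _] := HNf _ n hg; rewrite mul0r.
  + apply: cvP.
    have L := cv_sub (Cb 0%N) (cv_mulr (d 0%N) (Ca 0%N)).
    apply: (cv_ext (cv_comp L (mseq_unb Nf))).
    exists (Nf 0%N) => n hn; have hg := mseq_guard hn.
    rewrite /= -(SumId _ _ hg); apply: eq_bigr => u _; by rewrite hg.
- move=> k _.
  have L : cv (fun m => b m k) (g 0%N - f 0%N * d 0%N + f k * d k
           - \sum_(1 <= u < k.+1) f u * (d u - d u.-1)).
    apply: (cv_ext (cv_sub (cv_add (cv_sub (Cb 0%N) (cv_mulr (d 0%N) (Ca 0%N)))
                                    (cv_mulr (d k) (Ca k)))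
                           (@cv_sum _ (fun m u => a m u * (d u - d u.-1)) (fun u => f u * (d u - d u.-1)) 1 k.+1 (fun u => cv_mulr (d u - d u.-1) (Ca u))))).
    by exists 0%N => m _; rewrite -Id.
  exact: cv_unique (Cb k) L.
Qed.
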